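(* Let $p$ be an odd prime and let $\chi, r \in \mathbb{F}_{p^2}^\times$ with $\chi \neq \pm 1$, where the multiplicative order of $\chi$ divides $p+1$, and the multiplicative order of $r$ divides $2(p+1)$ but does not divide $p+1$. Then there exist $b_1, b_2, k \in \mathbb{F}_p$ with $k$ a quadratic nonresidue such that $\chi - \chi^{-1} = b_1\sqrt{k}$ and $r + r^{-1} = b_2\sqrt{k}$. Moreover, with these choices of $\chi$ and $r$, the set $$\left\{ \left( \chi + \chi^{-1},\ \frac{\chi + \chi^{-1}}{\chi - \chi^{-1}}\left(r\chi^\ell + \frac{1}{r\chi^\ell}\right),\ \frac{\chi + \chi^{-1}}{\chi - \chi^{-1}}\left(r\chi^{\ell + 1} + \frac{1}{r\chi^{\ell + 1}}\right)\right) : \ell \in \mathbb{Z} \right\}$$ contains triples with all coordinates in $\mathbb{F}_p = \mathbb{Z}/p\mathbb{Z}$.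
   Context: $\sqrt{k}$ denotes a fixed square root of $k$ in $\mathbb{F}_{p^2}$, and $\mathbb{F}_p$ is regarded as the prime subfield of $\mathbb{F}_{p^2}$. *)

(* Defs.v *)
From HB Require Import structures.
From mathcomp Require Import all_boot all_order all_algebra all_fingroup all_field.
Set Implicit Arguments. Unset Strict Implicit. Unset Printing Implicit Defensive.
Import GRing.Theory.
Local Open Scope ring_scope.

Definition in_prime_subfield (F : fieldType) (x : F) : Prop :=
  exists n : nat, x = n%:R.

Definition prime_field_nonresidue (F : fieldType) (k : F) : Prop :=
  [/\ in_prime_subfield k, k != 0 &
      ~ (exists y : F, in_prime_subfield y /\ y ^+ 2 = k)].

(* Main.v *)
Require Import Defs.
From HB Require Import structures.
From mathcomp Require Import all_boot all_order all_algebra all_fingroup all_field.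

From mathcomp Require Import zify.
Import GRing.Theory.
Local Open Scope ring_scope.

Lemma pow_pred_one (F : fieldType) (p : nat) (y : F) :
  (0 < p)%N -> y != 0 -> y ^+ p = y -> y ^+ p.-1 = 1.
Proof.
move=> p0 y0 hy; apply: (mulIf y0); rewrite mul1r -exprSr prednK //.
Qed.

Lemma natr_inj_lt (F : fieldType) (p : nat) (chF : p \in [pchar F]) (i j : nat) :
  (i < p)%N -> (j < p)%N -> i%:R = j%:R :> F -> i = j.
Proof.
move=> ip jp.
wlog ij : i j ip jp / (i <= j)%N.
  move=> H; case: (leqP i j) => h; first exact: H.
  by move=> e; apply/esym/H => //; [exact: ltnW].
move=> e; have : (j - i)%:R == 0 :> F by rewrite natrB // e subrr.
rewrite -(dvdn_pcharf chF) => d.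
have [e0|pos] := posnP (j - i); first by lia.
by have := dvdn_leq pos d; lia.
Qed.

Lemma fixed_prime (F : fieldType) (p : nat) (chF : p \in [pchar F]) (x : F) :
  x ^+ p = x -> in_prime_subfield x.
Proof.
move=> hx.
have pr : prime p := pcharf_prime chF.
have p1 : (1 < p)%N := prime_gt1 pr.
have [x0|x0] := eqVneq x 0; first by exists 0%N; rewrite x0.
case: (boolP [exists i : 'I_p, x == i%:R]) => [/existsP [i /eqP ->]|nex].
  by exists i.
exfalso.
pose rs := x :: [seq i%:R | i <- iota 1 p.-1].
have hp : (0 < p.-1)%N by lia.
have := @max_poly_roots F ('X^(p.-1) - 1) rs.
rewrite size_Xn_sub_1 // /rs /= size_map size_iota ltnn => H; suff: false by []; apply: H.
- by rewrite -size_poly_eq0 size_Xn_sub_1.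
- rewrite /= /root !hornerE subr_eq0 (@pow_pred_one _ p _ _ x0 hx) ?eqxx //=; last by lia.
  apply/allP => y /mapP [i]; rewrite mem_iota => /andP [i1 i2] ->.
  rewrite /root !hornerE subr_eq0; apply/eqP/pow_pred_one; first by lia.
    by rewrite -(dvdn_pcharf chF); apply/negP => /dvdn_leq; lia.
  by rewrite -(pFrobenius_autE chF) pFrobenius_aut_nat.
- rewrite /= map_inj_in_uniq ?iota_uniq ?andbT.
    apply/mapP => [[i]]; rewrite mem_iota => /andP [i1 i2] xi.
    move/existsP: nex; apply; have ip : (i < p)%N by lia.
    by exists (Ordinal ip); rewrite xi.
  move=> i j; rewrite !mem_iota => /andP [_ ?] /andP [_ ?].
  move=> e; apply: (natr_inj_lt _ _ chF _ _ _ _ e); lia.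
Qed.

Theorem corollary1 (p : nat) (F : finFieldType) (chi r : {unit F}) :
  prime p -> odd p -> #|F| = (p ^ 2)%N ->
  val chi != 1 -> val chi != -1 ->
  (#[chi]%g %| p.+1)%N ->
  (#[r]%g %| (p.+1).*2)%N -> ~~ (#[r]%g %| p.+1)%N ->
  (exists k : F, prime_field_nonresidue k /\
     forall sqrtk : F, sqrtk ^+ 2 = k ->
       exists b1 b2 : F, [/\ in_prime_subfield b1, in_prime_subfield b2,
         val chi - (val chi)^-1 = b1 * sqrtk &
         val r + (val r)^-1 = b2 * sqrtk])
  /\
  (exists l : int,
     let c := val chi in
     let t := (c + c^-1) / (c - c^-1) in
     [/\ in_prime_subfield (c + c^-1),
         in_prime_subfield (t * (val r * c ^ l + (val r * c ^ l)^-1)) &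
         in_prime_subfield (t * (val r * c ^ (l + 1) + (val r * c ^ (l + 1))^-1))]).
Proof.
move=> pr op cardF c1 cm1 ochi or1 or2.
have chF : p \in [pchar F] := card_finPcharP cardF pr.
have p1 : (1 < p)%N := prime_gt1 pr.
have p3 : (2 < p)%N.
  case: p pr op p1 {chF cardF ochi or1 or2} => [|[|[|]]] //.
have frD : forall x y : F, (x + y) ^+ p = x ^+ p + y ^+ p.
  by move=> x y; rewrite -!(pFrobenius_autE chF) rmorphD.
have frN : forall x : F, (- x) ^+ p = - x ^+ p.
  by move=> x; rewrite -!(pFrobenius_autE chF) rmorphN.
have frM : forall x y : F, (x * y) ^+ p = x ^+ p * y ^+ p.
  by move=> x y; rewrite exprMn.
have frV : forall x : F, (x^-1) ^+ p = (x ^+ p)^-1.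
  by move=> x; rewrite exprVn.
have two0 : (2%:R : F) != 0.
  by rewrite -(dvdn_pcharf chF); apply/negP => /dvdn_leq; lia.
have af0 : forall w : F, w ^+ p = - w -> w ^+ p = w -> w = 0.
  move=> w h1 h2; have : w * 2%:R == 0.
    by rewrite mulr_natr mulr2n -{1}h2 h1 addNr.
  by rewrite mulf_eq0 (negPf two0) orbF => /eqP.
have anti_mul : forall a b : F, a ^+ p = - a -> b ^+ p = - b -> (a * b) ^+ p = a * b.
  by move=> a b ha hb; rewrite frM ha hb mulrNN.
have anti_inv : forall b : F, b ^+ p = - b -> (b^-1) ^+ p = - b^-1.
  by move=> b hb; rewrite frV hb invrN.
have fix_anti : forall a b : F, a ^+ p = a -> b ^+ p = - b -> (a * b) ^+ p = - (a * b).
  by move=> a b ha hb; rewrite frM ha hb mulrN.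
set c := val chi.
have c0 : c != 0 by rewrite -unitfE; exact: (valP chi).
have cp : c ^+ p = c^-1.
  have : (chi ^+ p.+1)%g == 1%g by rewrite -cyclic.order_dvdn.
  move/eqP/(congr1 val); rewrite FinRing.val_unitX /= exprS -/c => h.
  by rewrite -[c ^+ p](mulKf c0) h mulr1.
set x := val r.
have x0 : x != 0 by rewrite -unitfE; exact: (valP r).
have xp : x ^+ p = - x^-1.
  have h1 : x ^+ p.+1 ^+ 2 = 1.
    have : (r ^+ (p.+1).*2)%g == 1%g by rewrite -cyclic.order_dvdn.
    by move/eqP/(congr1 val); rewrite FinRing.val_unitX /= -muln2 exprM.
  have h2 : x ^+ p.+1 != 1.
    apply/negP => /eqP h; move/negP: or2; apply; rewrite cyclic.order_dvdn.
    by apply/eqP/val_inj; rewrite FinRing.val_unitX.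
  have : x ^+ p.+1 == -1 by move/eqP: h1; rewrite sqrf_eq1 (negPf h2).
  move/eqP; rewrite exprS => h.
  by rewrite -[x ^+ p](mulKf x0) h mulrN1.
set s := c - c^-1.
have s0 : s != 0.
  rewrite /s subr_eq0; apply/negP => /eqP h.
  have : c ^+ 2 == 1 by rewrite expr2 {2}h mulfV.
  by rewrite sqrf_eq1 (negPf c1) (negPf cm1).
have sp : s ^+ p = - s by rewrite /s frD frN cp frV cp invrK opprB.
have inv_anti : forall y : F, y ^+ p = - y^-1 -> (y + y^-1) ^+ p = - (y + y^-1).
  by move=> y hy; rewrite frD frV hy invrN invrK opprD addrC.
have wp : (c + c^-1) ^+ p = c + c^-1 by rewrite frD frV cp invrK addrC.
split.
  exists (s ^+ 2); split.
    split.
    - by apply: (@fixed_prime _ _ chF); rewrite -exprM mulnC exprM sp sqrrN.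
    - by rewrite expf_neq0.
    - move=> [y [[n ->] hy]].
      have : (n%:R : F) ^+ p = n%:R by rewrite -(pFrobenius_autE chF) pFrobenius_aut_nat.
      move/eqP: hy; rewrite eqf_sqr => /orP [] /eqP e.
        by rewrite e sp => h; move/eqP: s0; apply; apply: af0 => //; rewrite sp h.
      rewrite e frN sp opprK => h; move/eqP: s0; apply; apply: af0 => //.
      by rewrite sp -h.
  move=> sk hsk.
  have skp : sk ^+ p = - sk.
    move/eqP: hsk; rewrite eqf_sqr => /orP [] /eqP ->; first by [].
    by rewrite frN sp opprK.
  have sk0 : sk != 0 by apply/negP => /eqP h; move: hsk; rewrite h expr0n /= => /esym/eqP; rewrite expf_eq0 (negPf s0) andbF.
  exists (s / sk), ((x + x^-1) / sk); split.
  - by apply: (@fixed_prime _ _ chF); apply: anti_mul => //; apply: anti_inv.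
  - by apply: (@fixed_prime _ _ chF); apply: anti_mul; [exact: inv_anti | apply: anti_inv].
  - by rewrite divfK.
  - by rewrite divfK.
exists 0; rewrite /= expr0z add0r expr1z mulr1.
have tp : ((c + c^-1) / s) ^+ p = - ((c + c^-1) / s) by apply: fix_anti => //; apply: anti_inv.
split.
- exact: (@fixed_prime _ _ chF).
- apply: (@fixed_prime _ _ chF); apply: anti_mul => //; exact: inv_anti.
- apply: (@fixed_prime _ _ chF); apply: anti_mul => //; apply: inv_anti.
  by rewrite frM xp cp invfM mulNr.
Qed.
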